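(* Let $\mathcal{D}\subset\mathbb{R}^N$ be open, bounded, connected. If $y_0\in\partial\mathcal{D}$ is not walk-regular, then there exists a continuous function $F:\partial\mathcal{D}\to\mathbb{R}$ such that the functions $u^\epsilon(x)=\mathbb{E}[F\circ X^{\epsilon,x}]$ satisfy $\limsup_{x\to y_0,\,\epsilon\to0}u^\epsilon(x)\ne F(y_0)$.
   Context: Probability space: $\Omega_1=B_1(0)\subset\mathbb{R}^N$ with Borel $\sigma$-algebra and normalised Lebesgue measure; $(\Omega,\mathcal{F},\mathbb{P})$ is the countable product $\Omega=(\Omega_1)^{\mathbb{N}}$, $\omega=\{w_i\}_{i\ge1}$. The $\epsilon$-ball walk started at $x\in\mathcal{D}$: $X_0^{\epsilon,x}\equiv x$, $X_n^{\epsilon,x}=X_{n-1}^{\epsilon,x}+\big(\epsilon\wedge\operatorname{dist}(X_{n-1}^{\epsilon,x},\partial\mathcal{D})\big)w_n$ for $n\ge1$; it converges $\mathbb{P}$-a.s. to a random variable $X^{\epsilon,x}:\Omega\to\partial\mathcal{D}$. A point $y_0\in\partial\mathcal{D}$ is walk-regular if for every $\eta,\delta>0$ there exist $\hat\delta\in(0,\delta)$ and $\hat\epsilon\in(0,1)$ such that $\mathbb{P}(X^{\epsilon,x_0}\in B_\delta(y_0))\ge1-\eta$ for all $\epsilon\in(0,\hat\epsilon)$ and all $x_0\in B_{\hat\delta}(y_0)\cap\mathcal{D}$. *)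

(* Defs.v *)
From HB Require Import structures.
From mathcomp Require Import all_boot all_order all_algebra.
From mathcomp Require Import all_classical all_reals all_analysis.
Set Implicit Arguments. Unset Strict Implicit. Unset Printing Implicit Defensive.
Import Order.TTheory GRing.Theory Num.Theory.
Import numFieldNormedType.Exports.
Local Open Scope classical_set_scope.
Local Open Scope ring_scope.

(* The library norm on 'rV is the
   max-norm; the paper's balls and distances are Euclidean, so we define the
   Euclidean norm explicitly.  (Topological notions -- open, closure,
   interior, connected, bounded, convergence -- coincide for both norms.) *)

Definition enorm (R : realType) (N : nat) (x : 'rV[R]_N) : R :=
  Num.sqrt (\sum_(i < N) x ord0 i ^+ 2).

Definition eball (R : realType) (N : nat) (c : 'rV[R]_N) (r : R) : set 'rV[R]_N :=
  [set x | enorm (x - c) < r].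

Definition bdry (R : realType) (N : nat) (D : set 'rV[R]_N) : set 'rV[R]_N :=
  closure D `\` D°.

Definition dist_bdry (R : realType) (N : nat) (D : set 'rV[R]_N) (x : 'rV[R]_N) : R :=
  inf [set enorm (x - y) | y in bdry D].

Definition borelN (R : realType) (N : nat) : set (set 'rV[R]_N) :=
  <<s [set A | exists (i : 'I_N) (B : set R), measurable B /\
                 A = (fun x : 'rV[R]_N => x ord0 i) @^-1` B] >>.

(* N-dimensional Lebesgue measure (on Borel sets), by iterated integration
   over the first coordinate (Tonelli). *)
Fixpoint lebN (R : realType) (N : nat) : set 'rV[R]_N -> \bar R :=
  match N with
  | 0 => fun A => if `[< A 0 >] then 1%E else 0%E
  | n.+1 => fun A =>
      (\int[@lebesgue_measure R]_t
         lebN [set y : 'rV[R]_n |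
                 A (\row_(j < n.+1) match unlift ord0 j with
                                    | Some k => y ord0 k
                                    | None => t end)])%E
  end.

Definition unif_ball (R : realType) (N : nat) (A : set 'rV[R]_N) : \bar R :=
  (lebN (A `&` eball 0 1) * (lebN (eball (0 : 'rV[R]_N) 1))^-1)%E.

Definition iid_unif_ball (R : realType) (N : nat) (d : measure_display)
  (T : measurableType d) (P : probability T R) (w : nat -> T -> 'rV[R]_N) : Prop :=
  (forall i (A : set 'rV[R]_N), borelN A -> measurable (w i @^-1` A)) /\
  (forall (n : nat) (A : nat -> set 'rV[R]_N), (forall i, borelN (A i)) ->
     P (\bigcap_(i in `I_n) (w i @^-1` A i)) = (\prod_(i < n) unif_ball (A i))%E).

(* The epsilon-ball walk: X_0 = x, X_{n+1} = X_n + (eps /\ dist(X_n,dD)) w_n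
   (the paper's w_{n+1} is our w n). *)
Fixpoint ball_walk (R : realType) (N : nat) (T : Type) (w : nat -> T -> 'rV[R]_N)
  (D : set 'rV[R]_N) (eps : R) (x : 'rV[R]_N) (om : T) (n : nat) : 'rV[R]_N :=
  match n with
  | 0 => x
  | n.+1 => let p := ball_walk w D eps x om n in
            p + (Num.min eps (dist_bdry D p)) *: w n om
  end.

(* Its a.s. limit X^{eps,x} (set to 0 on the null set where it diverges). *)
Definition walk_limit (R : realType) (N : nat) (T : Type) (w : nat -> T -> 'rV[R]_N)
  (D : set 'rV[R]_N) (eps : R) (x : 'rV[R]_N) (om : T) : 'rV[R]_N :=
  if `[< cvg (ball_walk w D eps x om @ \oo) >]
  then lim (ball_walk w D eps x om @ \oo) else 0.

Definition walk_regular (R : realType) (N : nat) (d : measure_display)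
  (T : measurableType d) (P : probability T R) (w : nat -> T -> 'rV[R]_N)
  (D : set 'rV[R]_N) (y0 : 'rV[R]_N) : Prop :=
  forall eta delta : R, 0 < eta -> 0 < delta ->
  exists dh eh : R, (0 < dh < delta) /\ (0 < eh < 1) /\
    forall (eps : R) (x0 : 'rV[R]_N), 0 < eps < eh -> (eball y0 dh `&` D) x0 ->
      ((1 - eta)%:E <= P [set om | eball y0 delta (walk_limit w D eps x0 om)])%E.

Definition u_walk (R : realType) (N : nat) (d : measure_display)
  (T : measurableType d) (P : probability T R) (w : nat -> T -> 'rV[R]_N)
  (D : set 'rV[R]_N) (F : 'rV[R]_N -> R) (eps : R) (x : 'rV[R]_N) : \bar R :=
  (\int[P]_om (F (walk_limit w D eps x om))%:E)%E.

Definition limsup_near (R : realType) (N : nat) (D : set 'rV[R]_N)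
  (u : R -> 'rV[R]_N -> \bar R) (y0 : 'rV[R]_N) : \bar R :=
  ereal_inf [set ereal_sup [set u eps x | eps in [set e : R | 0 < e < delta] &
                                          x in eball y0 delta `&` D]
            | delta in [set r : R | 0 < r]].

(* Main.v *)
Require Import Defs.
From HB Require Import structures.
From mathcomp Require Import all_boot all_order all_algebra.
From mathcomp Require Import all_classical all_reals all_analysis.
From mathcomp Require Import ring lra.
From Stdlib Require Import Classical.
Import Order.TTheory GRing.Theory Num.Theory.
Import numFieldNormedType.Exports.
Local Open Scope classical_set_scope.
Local Open Scope ring_scope.

Section Enorm.
Variables (R : realType) (N : nat).
Implicit Types x y : 'rV[R]_N.

Lemma CS (a b : 'I_N -> R) :
  (\sum_i a i * b i) ^+ 2 <= (\sum_i a i ^+ 2) * (\sum_i b i ^+ 2).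
Proof.
set A := \sum_i a i ^+ 2; set B := \sum_i b i ^+ 2; set C := \sum_i a i * b i.
have B0 : 0 <= B by apply: sumr_ge0 => i _; exact: sqr_ge0.
have A0 : 0 <= A by apply: sumr_ge0 => i _; exact: sqr_ge0.
have [Be0|Bne0] := eqVneq B 0.
  have bi0 : forall i, b i = 0.
    move=> i; have := @psumr_eq0P _ _ xpredT (fun i => b i ^+ 2) (fun i _ => sqr_ge0 (b i)) Be0 i isT.
    by move/eqP; rewrite sqrf_eq0 => /eqP.
  have -> : C = 0 by rewrite /C big1 // => i _; rewrite bi0 mulr0.
  by rewrite expr0n /= Be0 mulr0.
have Bp : 0 < B by rewrite lt_def Bne0 B0.
have H : 0 <= \sum_i (a i * B - b i * C) ^+ 2 by apply: sumr_ge0 => i _; exact: sqr_ge0.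
have E : \sum_i (a i * B - b i * C) ^+ 2 = B * (A * B - C ^+ 2).
  rewrite (eq_bigr (fun i => a i ^+ 2 * B ^+ 2 - (a i * b i) * (2 * B * C) + b i ^+ 2 * C ^+ 2)); last first.
    by move=> i _; ring.
  rewrite big_split /= sumrB -!mulr_suml -/A -/B -/C; ring.
rewrite E in H.
have : 0 <= A * B - C ^+ 2 by rewrite -(pmulr_rge0 _ Bp).
by rewrite subr_ge0.
Qed.

Lemma enorm_ge0 x : 0 <= enorm x.
Proof. exact: sqrtr_ge0. Qed.

Lemma enormN x : enorm (- x) = enorm x.
Proof. by rewrite /enorm; congr Num.sqrt; apply: eq_bigr => i _; rewrite mxE sqrrN. Qed.

Lemma enormB x y : enorm (x - y) = enorm (y - x).
Proof. by rewrite -enormN opprB. Qed.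

Lemma enormD x y : enorm (x + y) <= enorm x + enorm y.
Proof.
rewrite /enorm.
set A := \sum_i x ord0 i ^+ 2; set B := \sum_i y ord0 i ^+ 2.
set C := \sum_i x ord0 i * y ord0 i.
have A0 : 0 <= A by apply: sumr_ge0 => i _; exact: sqr_ge0.
have B0 : 0 <= B by apply: sumr_ge0 => i _; exact: sqr_ge0.
have -> : \sum_i (x + y) ord0 i ^+ 2 = A + C *+ 2 + B.
  rewrite (eq_bigr (fun i => x ord0 i ^+ 2 + (x ord0 i * y ord0 i) *+ 2 + y ord0 i ^+ 2)); last first.
    by move=> i _; rewrite mxE sqrrD.
  by rewrite !big_split.
have CS' : C <= Num.sqrt A * Num.sqrt B.
  rewrite -sqrtrM // (le_trans (ler_norm C)) // -sqrtr_sqr ler_sqrt ?mulr_ge0 //.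
  exact: CS.
rewrite -[X in _ <= X]ger0_norm ?addr_ge0 ?sqrtr_ge0 // -sqrtr_sqr ler_sqrt ?sqr_ge0 //.
rewrite sqrrD !sqr_sqrtr //.
by rewrite lerD2r lerD2l lerMn2r CS' orbT.
Qed.

Lemma coord_le_enorm x i : `|x ord0 i| <= enorm x.
Proof.
rewrite /enorm -sqrtr_sqr ler_sqrt; last by apply: sumr_ge0 => j _; exact: sqr_ge0.
rewrite (bigD1 i) //= lerDl; apply: sumr_ge0 => j _; exact: sqr_ge0.
Qed.

Lemma enorm_le_sum x : enorm x <= \sum_i `|x ord0 i|.
Proof.
have S0 : 0 <= \sum_i `|x ord0 i| by apply: sumr_ge0.
rewrite /enorm -[X in _ <= X]ger0_norm // -sqrtr_sqr ler_sqrt ?sqr_ge0 //.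
have [] : \sum_i x ord0 i ^+ 2 <= (\sum_i `|x ord0 i|) ^+ 2 /\ 0 <= \sum_i `|x ord0 i| => //.
elim/big_ind2: _ => [|x1 x2 y1 y2 [h1 h1'] [h2 h2']|i _].
- by rewrite expr0n.
- split; last exact: addr_ge0.
  rewrite sqrrD; have := mulr_ge0 h1' h2'; lra.
- by rewrite real_normK ?num_real.
Qed.

Lemma normE x : `|x| = \big[Num.max/0]_ij `|x ij.1 ij.2|.
Proof. by rewrite [LHS]/Num.norm /= mx_normrE. Qed.

Lemma coord_le_norm x i : `|x ord0 i| <= `|x|.
Proof. by rewrite normE; apply: (le_bigmax _ (fun ij : 'I_1 * 'I_N => `|x ij.1 ij.2|) (ord0, i)). Qed.

Lemma norm_le_enorm x : `|x| <= enorm x.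
Proof.
rewrite normE; apply/bigmax_leP; split => [|[i j] _ /=]; first exact: enorm_ge0.
by rewrite (ord1 i); exact: coord_le_enorm.
Qed.

Lemma enorm_le_norm x : enorm x <= N%:R * `|x|.
Proof.
apply: (le_trans (enorm_le_sum x)).
rewrite -[N in N%:R]card_ord -sum1_card natr_sum mulr_suml.
by apply: ler_sum => i _; rewrite mul1r coord_le_norm.
Qed.

End Enorm.
Arguments enorm_ge0 {R N} x.
Arguments enormN {R N} x.
Arguments enormB {R N} x y.
Arguments enormD {R N} x y.
Arguments coord_le_enorm {R N} x i.
Arguments enorm_le_sum {R N} x.
Arguments coord_le_norm {R N} x i.
Arguments norm_le_enorm {R N} x.
Arguments enorm_le_norm {R N} x.


Section Meas.
Variables (d : measure_display) (T : measurableType d) (R : realType) (N : nat).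

Definition mcoord (p : T -> 'rV[R]_N) :=
  forall i, measurable_fun setT (fun om => p om ord0 i).

Lemma mlt (g : T -> R) c : measurable_fun setT g -> measurable [set om | g om < c].
Proof.
move=> mg; have := mg measurableT _ (measurable_itv `]-oo, c[); rewrite setTI.
congr measurable; apply/seteqP; split => om /=; by rewrite in_itv /=.
Qed.

Lemma mgt (g : T -> R) c : measurable_fun setT g -> measurable [set om | c < g om].
Proof.
move=> mg; have := mg measurableT _ (measurable_itv `]c, +oo[); rewrite setTI.
congr measurable; apply/seteqP; split => om /=; by rewrite in_itv /= andbT.
Qed.

Lemma m_enorm (p : T -> 'rV[R]_N) (q : 'rV[R]_N) : mcoord p ->
  measurable_fun setT (fun om => enorm (p om - q)).
Proof.
move=> mp; rewrite /enorm.
have h1 : measurable_fun setT (@Num.sqrt R) by exact: measurable_realfun.continuous_measurable_fun (@sqrt_continuous R).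
have h2 : measurable_fun setT (fun om => \sum_(i < N) (p om - q) ord0 i ^+ 2).
  apply: measurable_sum => i /=.
  under eq_fun do rewrite !mxE.
  apply: measurable_realfun.measurable_funX.
  apply: measurable_realfun.measurable_funB => //.
exact: (measurableT_comp h1 h2).
Qed.
Lemma m_lip (h : 'rV[R]_N -> R) (p : T -> 'rV[R]_N) :
  (forall x y, h x <= h y + enorm (x - y)) -> mcoord p ->
  measurable_fun setT (fun om => h (p om)).
Proof.
move=> hL mp.
apply: (measurability _ (measurable_realfun.RGenOInfty.measurableE R)).
move=> _ [_ [a ->] <-].
pose S := fun c : 'rV[rat]_N * rat =>
  if (a < h (map_mx ratr c.1) - ratr c.2) && (0 < ratr c.2 :> R)
  then [set om | enorm (p om - map_mx ratr c.1) < ratr c.2] else set0.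
have -> : setT `&` (fun om => h (p om)) @^-1` `]a, +oo[%classic = \bigcup_c S c.
  apply/seteqP; split => om.
  - move=> [_ /=]; rewrite in_itv /= andbT => ha.
    set v := p om.
    have e0 : 0 < (h v - a) / 2 by rewrite divr_gt0 // subr_gt0.
    have [r] := rat_in_itvoo e0; rewrite in_itv /= => /andP[r0 r1].
    pose del : R := ratr r / (N%:R + 1).
    have del0 : 0 < del by rewrite divr_gt0 // ltr_wpDl.
    have H : forall i, exists qi : rat, `|v ord0 i - ratr qi| < del.
      move=> i; have : v ord0 i - del < v ord0 i + del by rewrite ltrD2l gtrN.
      move=> /rat_in_itvoo[qi]; rewrite in_itv /= => Hq; exists qi.
      by rewrite ltr_distlC.
    have [qf Hq] := choice H.
    exists (\row_i qf i, r) => //.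
    have Eq : forall i, map_mx ratr (\row_i qf i) ord0 i = ratr (qf i) :> R.
      by move=> i; rewrite !mxE.
    have En : enorm (v - map_mx ratr (\row_i qf i)) < ratr r.
      apply: (le_lt_trans (@enorm_le_sum _ _ _)).
      apply: (le_lt_trans (y := \sum_(i < N) del)).
        by apply: ler_sum => i _; rewrite !mxE; exact/ltW/Hq.
      have Hd : del * (N%:R + 1) = ratr r.
        by rewrite /del divfK // gt_eqF // ltr_wpDl.
      rewrite sumr_const card_ord -mulr_natl.
      rewrite (_ : N%:R * del = ratr r - del); last by rewrite -Hd; ring.
      by rewrite ltrBlDr ltrDl.
    rewrite /S /= r0 andbT ifT //=.
    have := hL v (map_mx ratr (\row_i qf i)).
    move: En r1; set q := map_mx _ _; set en := enorm _ => En r1 hv.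
    rewrite -(@ltr_pM2r _ 2) // divfK // in r1; lra.
  - move=> [c _]; rewrite /S; case: ifP => [/andP[H1 H2] /= Hom|_ []].
    split => //=; rewrite in_itv /= andbT.
    have := hL (map_mx ratr c.1) (p om); rewrite enormB; lra.
apply: countable_bigcupT_measurable; first exact: countableP.
move=> c; rewrite /S; case: ifP => _; last exact: measurable0.
exact: mlt (m_enorm _ _ mp).
Qed.

End Meas.
Arguments mcoord {d T R N} p.
Arguments mlt {d T R} g c.
Arguments mgt {d T R} g c.
Arguments m_enorm {d T R N} p q.
Arguments m_lip {d T R N} h p.


Section Anal.
Variables (R : realType) (N : nat).
Implicit Types (s : nat -> 'rV[R]_N).

Lemma archi {e : R} : 0 < e -> exists k : nat, k.+1%:R^-1 < e :> R.
Proof.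
move=> e0; exists (Num.trunc e^-1).
rewrite invf_plt ?posrE //; exact: truncnS_gt.
Qed.

Lemma small_lt {e : R} : 0 < e -> N%:R * (e / (N%:R + 1)) < e.
Proof.
move=> e0.
have Hd : (e / (N%:R + 1)) * (N%:R + 1) = e by rewrite divfK // gt_eqF // ltr_wpDl.
have c0 : 0 < e / (N%:R + 1) by rewrite divr_gt0 // ltr_wpDl.
rewrite (_ : N%:R * (e / (N%:R + 1)) = e - e / (N%:R + 1)); last first.
  by rewrite -{2}Hd; ring.
by rewrite ltrBlDr ltrDl.
Qed.

Lemma enorm_near s (L : 'rV[R]_N) : s @ \oo --> L ->
  forall e : R, 0 < e -> \forall n \near \oo, enorm (s n - L) < e.
Proof.
move=> /cvgrPdist_lt H e e0.
have c0 : 0 < e / (N%:R + 1) by rewrite divr_gt0 // ltr_wpDl.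
apply: filterS (H _ c0) => n Hn.
apply: (le_lt_trans (@enorm_le_norm _ _ _)).
apply: (le_lt_trans _ (small_lt e0)).
by rewrite distrC ler_wpM2l // ltW.
Qed.

Lemma cauchy_of_cvg s (L : 'rV[R]_N) : s @ \oo --> L ->
  forall k : nat, exists M, forall n, (M <= n)%N -> enorm (s n - s M) < k.+1%:R^-1.
Proof.
move=> H k.
have e0 : 0 < k.+1%:R^-1 / 2 :> R by rewrite divr_gt0 // invr_gt0 ltr0Sn.
have [M _ HM] := enorm_near _ _ H _ e0.
exists M => n Mn.
have -> : s n - s M = (s n - L) + (L - s M) by rewrite addrA subrK.
apply: (le_lt_trans (@enormD _ _ _ _)).
rewrite (@enormB _ _ L).
move: (HM n Mn) (HM M (leqnn M)) => /= h1 h2; move: h1 h2; set c := (k.+1%:R^-1 : R) => h1 h2; lra.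
Qed.

Lemma cvg_of_cauchy s :
  (forall k : nat, exists M, forall n, (M <= n)%N -> enorm (s n - s M) < k.+1%:R^-1) ->
  cvg (s @ \oo).
Proof.
move=> H; apply: cauchy_cvg; apply: cauchy_exP => e e0.
have [k Hk] := archi e0.
have [M HM] := H k.
exists (s M); exists M => // n /= Mn.
rewrite -ball_normE /=.
apply: (le_lt_trans (@norm_le_enorm _ _ _)).
by rewrite enormB; apply: lt_trans (HM n Mn) Hk.
Qed.

Lemma lim_ball s y0 (del : R) : cvg (s @ \oo) ->
  (enorm (lim (s @ \oo) - y0) < del <->
   exists k M, forall n, (M <= n)%N -> enorm (s n - y0) < del - k.+1%:R^-1).
Proof.
move=> Hc; set L := lim _.
have HcL : s @ \oo --> L := Hc.
clearbody L; split.
- move=> HL.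
  have e0 : 0 < (del - enorm (L - y0)) / 2 by rewrite divr_gt0 // subr_gt0.
  have [k Hk] := archi e0.
  have c0 : 0 < k.+1%:R^-1 :> R by rewrite invr_gt0 ltr0Sn.
  have [M _ HM] := enorm_near _ _ HcL _ c0.
  exists k, M => n Mn.
  have -> : s n - y0 = (s n - L) + (L - y0) by rewrite addrA subrK.
  apply: (le_lt_trans (@enormD _ _ _ _)).
  move: (HM n Mn) Hk => /= h1 h2; move: h1 h2; set c := (k.+1%:R^-1 : R) => h1 h2; lra.
- move=> [k [M HM]].
  have c0 : 0 < k.+1%:R^-1 :> R by rewrite invr_gt0 ltr0Sn.
  have [M' _ HM'] := enorm_near _ _ HcL _ c0.
  have h1 := HM (maxn M M') (leq_maxl _ _).
  have /= h2 := HM' (maxn M M') (leq_maxr _ _).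
  have -> : L - y0 = (L - s (maxn M M')) + (s (maxn M M') - y0) by rewrite addrA subrK.
  apply: (le_lt_trans (@enormD _ _ _ _)).
  rewrite (@enormB _ _ L).
  move: h1 h2; set c := (k.+1%:R^-1 : R) => h1 h2; lra.
Qed.

Lemma lip_continuous (h : 'rV[R]_N -> R) (K : R) : 0 <= K ->
  (forall x y, `|h x - h y| <= K * enorm (x - y)) -> continuous h.
Proof.
move=> K0 hL x; apply/(cvgrPdist_lt (FF := nbhs_filter x)) => e e0.
have P0 : 0 < (K + 1) * (N%:R + 1) by rewrite mulr_gt0 // ?ltr_wpDl.
pose c := e / ((K + 1) * (N%:R + 1)).
have c0 : 0 < c by rewrite divr_gt0.
have Hc : c * ((K + 1) * (N%:R + 1)) = e by rewrite divfK // gt_eqF.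
apply/nbhs_ballP; exists c => // y; rewrite -ball_normE /= => Hxy.
apply: (le_lt_trans (hL x y)).
have E1 : K * enorm (x - y) <= K * (N%:R * c).
  apply: ler_wpM2l => //; apply: (le_trans (@enorm_le_norm _ _ _)).
  by apply: ler_wpM2l => //; exact: ltW.
apply: (le_lt_trans E1).
have E2 : K * (N%:R * c) = c * ((K + 1) * (N%:R + 1)) - c * (K + N%:R + 1) by ring.
rewrite E2 Hc ltrBlDr ltrDl; apply: mulr_gt0 => //.
by rewrite -addrA ltr_wpDl // ltr_wpDl.
Qed.

End Anal.
Arguments enorm_near {R N s L}.
Arguments cauchy_of_cvg {R N s L}.
Arguments cvg_of_cauchy {R N s}.
Arguments lim_ball {R N s y0 del}.
Arguments lip_continuous {R N h K}.


Section Walk.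
Variables (d : measure_display) (T : measurableType d) (R : realType) (N : nat).
Variables (w : nat -> T -> 'rV[R]_N) (D : set 'rV[R]_N).
Hypothesis mw : forall n, mcoord (w n).
Hypothesis bne : bdry D !=set0.

Lemma dist_lip x y : dist_bdry D x <= dist_bdry D y + enorm (x - y).
Proof.
case: bne => z0 bz0.
rewrite -lerBlDr; apply: lb_le_inf.
  by exists (enorm (y - z0)), z0.
move=> _ [z bz <-]; rewrite lerBlDr.
have hb : has_lbound [set enorm (x - y1) | y1 in bdry D].
  by exists 0 => _ [y1 _ <-]; exact: enorm_ge0.
apply: le_trans (ge_inf hb (ex_intro2 _ _ z bz erefl)) _.
have -> : x - z = (y - z) + (x - y) by rewrite [RHS]addrC addrA subrK.
exact: enormD.
Qed.

Lemma mcoordB (p q : T -> 'rV[R]_N) : mcoord p -> mcoord q ->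
  mcoord (fun om => p om - q om).
Proof.
move=> mp mq i; under eq_fun do rewrite !mxE.
exact: measurable_realfun.measurable_funB.
Qed.

Lemma walk_mcoord eps x n : mcoord (fun om => ball_walk w D eps x om n).
Proof.
elim: n => [|n IH] i /=; first exact: measurable_cst.
under eq_fun do rewrite !mxE.
apply: measurable_realfun.measurable_funD => //.
apply: measurable_realfun.measurable_funM; last exact: mw.
apply: (m_lip (fun v => Num.min eps (dist_bdry D v))) => // a b.
have h1 := dist_lip a b.
have h0 := enorm_ge0 (a - b).
have e1 : Num.min eps (dist_bdry D a) <= eps by rewrite ge_min lexx.
have e2 : Num.min eps (dist_bdry D a) <= dist_bdry D a by rewrite ge_min lexx orbT.
rewrite -lerBlDr le_min; apply/andP; split; rewrite lerBlDr; lra.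
Qed.

Variables (eps : R) (x : 'rV[R]_N).
Local Notation s := (ball_walk w D eps x).

Definition Cset := [set om | forall k : nat, exists M, forall n, (M <= n)%N ->
  enorm (s om n - s om M) < k.+1%:R^-1].

Lemma mdiff n M c : measurable [set om | enorm (s om n - s om M) < c].
Proof.
have := mlt _ c (m_enorm _ 0 (mcoordB _ _ (walk_mcoord eps x n) (walk_mcoord eps x M))).
congr measurable; apply/seteqP; split => om /=; by rewrite subr0.
Qed.

Lemma mdist n y0 c : measurable [set om | enorm (s om n - y0) < c].
Proof. exact: mlt _ c (m_enorm _ y0 (walk_mcoord eps x n)). Qed.

Lemma Cset_meas : measurable Cset.
Proof.
have -> : Cset = \bigcap_k \bigcup_M \bigcap_n (if (M <= n)%N then
    [set om | enorm (s om n - s om M) < k.+1%:R^-1] else setT).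
  apply/seteqP; split => om.
  - move=> H k _; have [M HM] := H k; exists M => // n _; case: ifP => // Mn.
    exact: HM.
  - move=> H k; have [M _ HM] := H k I; exists M => n Mn.
    by have := HM n I; rewrite Mn.
apply: bigcapT_measurable => k; apply: bigcupT_measurable => M.
apply: bigcapT_measurable => n; case: ifP => _ //.
exact: mdiff.
Qed.

Lemma S_meas y0 del : measurable [set om | eball y0 del (walk_limit w D eps x om)].
Proof.
pose B1 := [set om | exists k M, forall n, (M <= n)%N ->
  enorm (s om n - y0) < del - k.+1%:R^-1].
have -> : [set om | eball y0 del (walk_limit w D eps x om)] =
    (Cset `&` B1) `|` (~` Cset `&` [set _ | enorm (0 - y0) < del]).
  apply/seteqP; split => om; rewrite /eball /walk_limit /=;
    case: (asboolP (cvg (s om @ \oo))) => Hc.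
  - by move=> HL; left; split; [exact: (cauchy_of_cvg Hc)|exact: (lim_ball Hc).1].
  - by move=> H0; right; split => // HC; apply: Hc; exact: cvg_of_cauchy.
  - case=> [[_ HB]|[HnC _]]; first exact: (lim_ball Hc).2.
    by exfalso; apply: HnC; exact: (cauchy_of_cvg Hc).
  - case=> [[HC _]|[_ H0]] //.
    by exfalso; apply: Hc; exact: cvg_of_cauchy.
apply: measurableU; apply: measurableI.
- exact: Cset_meas.
- have -> : B1 = \bigcup_k \bigcup_M \bigcap_n (if (M <= n)%N then
      [set om | enorm (s om n - y0) < del - k.+1%:R^-1] else setT).
    apply/seteqP; split => om.
    - move=> [k [M HM]]; exists k => //; exists M => // n _; case: ifP => // Mn.
      exact: HM.
    - move=> [k _ [M _ HM]]; exists k, M => n Mn.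
      by have := HM n I; rewrite Mn.
  apply: bigcupT_measurable => k; apply: bigcupT_measurable => M.
  apply: bigcapT_measurable => n; case: ifP => _ //.
  exact: mdist.
- exact/measurableC/Cset_meas.
- have [h|h] := boolP (enorm (0 - y0) < del).
    by rewrite (_ : [set _ | _] = setT) //; apply/seteqP; split.
  by rewrite (_ : [set _ | _] = set0) //; apply/seteqP; split => // om /=; rewrite (negbTE h).
Qed.

End Walk.


Lemma min_lip (R : realType) (u v : R) :
  `|Num.min 1 u - Num.min 1 v| <= `|u - v|.
Proof.
have h1 := ler_norm (u - v); have h2 := ler_norm (v - u); rewrite distrC in h2.
rewrite ler_norml.
case: (lerP 1 u) => hu; case: (lerP 1 v) => hv; apply/andP; split; lra.
Qed.

Theorem lemma2p15 (R : realType) (N : nat) (d : measure_display)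
  (T : measurableType d) (P : probability T R) (w : nat -> T -> 'rV[R]_N)
  (D : set 'rV[R]_N) (y0 : 'rV[R]_N) :
  iid_unif_ball P w ->
  open D -> bounded_set D -> connected D ->
  bdry D y0 ->
  ~ walk_regular P w D y0 ->
  exists F : 'rV[R]_N -> R,
    {within bdry D, continuous F} /\
    limsup_near D (u_walk P w D F) y0 <> (F y0)%:E.
Proof.
move=> [mwA _] _ _ _ by0 nreg.
have mw : forall n, mcoord (w n).
  move=> n i _ B mB; rewrite setTI.
  apply: (mwA n ((fun x : 'rV[R]_N => x ord0 i) @^-1` B)).
  by apply: sub_sigma_algebra; exists i, B; split.
have bne : bdry D !=set0 by exists y0.
have [eta [delta [eta0 [delta0 H]]]] : exists eta delta : R, 0 < eta /\ 0 < delta /\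
    forall dh eh : R, 0 < dh < delta -> 0 < eh < 1 -> exists eps x0,
      (0 < eps < eh) /\ (eball y0 dh `&` D) x0 /\
      ~ ((1 - eta)%:E <= P [set om | eball y0 delta (walk_limit w D eps x0 om)])%E.
  apply: NNPP => Hn; apply: nreg => eta delta eta0 delta0.
  apply: NNPP => Hn2; apply: Hn; exists eta, delta; split => //; split => // dh eh Hdh Heh.
  apply: NNPP => Hn3; apply: Hn2; exists dh, eh; split => //; split => // eps x0 Heps Hx0.
  apply: NNPP => Hn4; apply: Hn3; exists eps, x0; done.
pose F := fun y : 'rV[R]_N => Num.min 1 (enorm (y - y0) / delta).
exists F; split.
  apply: continuous_subspaceT.
  apply: (@lip_continuous _ _ F delta^-1); first by rewrite invr_ge0 ltW.
  move=> a b; apply: (le_trans (min_lip _ _ _)).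
  rewrite -mulrBl normrM (gtr0_norm (x := delta^-1)); last by rewrite invr_gt0.
  rewrite [X in _ <= X]mulrC ler_pM2r ?invr_gt0 //.
  have t1 := enormD (a - b) (b - y0); have t2 := enormD (b - a) (a - y0).
  rewrite addrA subrK in t1; rewrite addrA subrK (enormB b a) in t2.
  rewrite ler_norml; apply/andP; split; lra.
have F0 : forall y, 0 <= F y.
  move=> y; rewrite /F le_min ler01 /=; apply: divr_ge0; [exact: enorm_ge0|exact: ltW].
have Fy0 : F y0 = 0.
  apply/eqP; rewrite eq_le F0 andbT /F ge_min; apply/orP; right.
  rewrite subrr /enorm big1 ?sqrtr0 ?mul0r // => i _; by rewrite mxE expr0n.
have key : forall d' : R, 0 < d' -> (eta%:E <= ereal_sup [set u_walk P w D F eps x |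
    eps in [set e | (0 < e < d')%R] & x in eball y0 d' `&` D])%E.
  move=> d' d'0.
  have m0 : 0 < Num.min d' delta by rewrite lt_min d'0 delta0.
  have m1 : Num.min d' delta <= d' by rewrite ge_min lexx.
  have m2 : Num.min d' delta <= delta by rewrite ge_min lexx orbT.
  have n0 : 0 < Num.min d' 1 by rewrite lt_min d'0 ltr01.
  have n1 : Num.min d' 1 <= d' by rewrite ge_min lexx.
  have n2 : Num.min d' 1 <= 1 by rewrite ge_min lexx orbT.
  have [eps [x0 [/andP[eps0 eps1] [Hx0 HP]]]] :=
    H (Num.min d' delta / 2) (Num.min d' 1 / 2)
      (ltac:(apply/andP; split; lra)) (ltac:(apply/andP; split; lra)).
  apply: le_trans (ereal_sup_ubound _).
  2: { exists eps; first (rewrite /=; apply/andP; split; lra).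
       exists x0 => //; case: Hx0 => Hx0 Dx0; split => //.
       rewrite /eball /= in Hx0 *; lra. }
  rewrite /u_walk ge0_integralTE; last by move=> om; rewrite lee_fin.
  set S := [set om | eball y0 delta (walk_limit w D eps x0 om)].
  have mS : measurable S := @S_meas _ _ _ _ w D mw bne eps x0 y0 delta.
  apply: le_trans (ereal_sup_ubound _).
  2: { exists (indic_nnsfun R (measurableC mS)); last reflexivity.
       move=> om; change ((\1_(~` S) om)%:E <= (F (walk_limit w D eps x0 om))%:E)%E.
       rewrite indicE lee_fin.
       case E: (_ \in _); last by rewrite F0.
       move: E => /set_mem; rewrite /S /eball /= => /negP; rewrite -leNgt => hge.
       by rewrite /F le_min lexx /= ler_pdivlMr // mul1r. }
  rewrite (_ : sintegral _ _ = P (~` S)); last exact: sintegral_indic.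
  rewrite probability_setC //.
  have PS0 : (0 <= P S)%E by apply: measure_ge0.
  have PS1 : (P S <= 1)%E by apply: probability_le1.
  move: (P S) HP PS0 PS1 => [r| |] HP PS0 PS1; last 2 first.
  - by rewrite leye_eq in PS1.
  - by rewrite leeNy_eq in PS0.
  rewrite -EFinB lee_fin; rewrite lee_fin in HP; move/negP: HP; rewrite -ltNge => HP.
  lra.
move=> Heq.
have : (eta%:E <= limsup_near D (u_walk P w D F) y0)%E.
  by apply/ereal_infP => _ [d' d'0 <-]; exact: key.
rewrite Heq lee_fin; move: Fy0; lra.
Qed.
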